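(* Consider the SAMBA process with a constant learning rate $\alpha\in(0,1)$ satisfying $\alpha<\frac{\Delta}{r^\star-\Delta}$. Let $$\tau(2):=\min\Big\{t\ge1:p_{a^\star}(t)>\tfrac12\Big\},\qquad E(2):=\Big\{\mathbf p\in\mathcal P:\ \tfrac{1-\alpha}{2}\le p_{a^\star}<\tfrac12\Big\}.$$ Then $$\sup_{\mathbf p\in E(2)}\mathbb E\big[\tau(2)\,\big|\,\mathbf p(0)=\mathbf p\big]<\infty.$$
   Context: $\mathcal P$ is the set of probability vectors on $\mathcal A$. Bandit model: $\mathcal A$ finite set of arms, $N=|\mathcal A|$; $R_a(t)\in\{0,1\}$ independent Bernoulli with mean $r_a$ for $a\in\mathcal A$, $t\in\mathbb Z_+$; unique optimal arm $a^\star$ with $r^\star:=r_{a^\star}>r_a$ for $a\ne a^\star$; $\Delta:=r^\star-\max_{a\ne a^\star}r_a>0$. SAMBA process with constant learning rate $\alpha$, started from $\mathbf p(0)$: at time $t$, $a_\star(t)$ is an arm maximizing $p_a(t)$ (ties broken uniformly at random), $p_\star(t)=p_{a_\star(t)}(t)$; one arm is played, arm $a$ with conditional probability $p_a(t)$ given the past; $I_a(t)$ indicates that $a$ is played, $I_\star(t)=I_{a_\star(t)}(t)$, $R_\star(t)=R_{a_\star(t)}(t)$. For $a\ne a_\star(t)$: $p_a(t+1)=p_a(t)+\alpha p_a(t)^2\big[\frac{I_a(t)R_a(t)}{p_a(t)}-\frac{I_\star(t)R_\star(t)}{p_\star(t)}\big]$, and $p_{a_\star(t)}(t+1)=1-\sum_{a\ne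 a_\star(t)}p_a(t+1)$. *)

(* Defs.v *)
From HB Require Import structures.
From mathcomp Require Import all_boot all_order all_algebra.
From mathcomp Require Import all_classical all_reals ereal.
Set Implicit Arguments. Unset Strict Implicit. Unset Printing Implicit Defensive.
Import Order.TTheory GRing.Theory Num.Theory.
Local Open Scope ring_scope.

(* The SAMBA process as a time-homogeneous Markov chain on probability
   vectors p : A -> R.  One step is driven by an outcome
   (l, a, b) : A * A * bool where
     l = the leader a_*(t) (a maximizer of p, chosen uniformly at random),
     a = the arm played (chosen with probability p_a),
     b = the reward R_a(t) of the played arm (Bernoulli(r_a), independent).
   Only the reward of the played arm enters the update (through I_a R_a). *)

Section Samba.
Variables (R : realType) (A : finType).

Definition Outcome := (A * A * bool)%type.

Definition simplex (p : A -> R) : Prop :=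
  (forall a, 0 <= p a) /\ \sum_(a : A) p a = 1.

Definition argmaxs (p : A -> R) : {set A} := [set l | [forall c, p c <= p l]].

Definition step_prob (r : A -> R) (p : A -> R) (o : Outcome) : R :=
  let: (l, a, b) := o in
  (if l \in argmaxs p then #|argmaxs p|%:R^-1 else 0)
  * p a * (if b then r a else 1 - r a).

Definition samba_upd (alpha : R) (p : A -> R) (o : Outcome) (c : A) : R :=
  let: (l, a, b) := o in
  p c + alpha * p c ^+ 2 *
        (((c == a) && b)%:R / p c - ((l == a) && b)%:R / p l).

Definition samba_next (alpha : R) (p : A -> R) (o : Outcome) : A -> R :=
  let: (l, a, b) := o in
  fun c => if c == l then 1 - \sum_(c' | c' != l) samba_upd alpha p o c'
           else samba_upd alpha p o c.

Fixpoint path_prob (r : A -> R) (alpha : R) (p : A -> R) (s : seq Outcome) : R :=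
  if s is o :: s' then step_prob r p o * path_prob r alpha (samba_next alpha p o) s'
  else 1.

(* min(tau(2), size s) along the path s, where
   tau(2) = min { t >= 1 : p_{astar}(t) > 1/2 } *)
Fixpoint tau2_trunc (astar : A) (alpha : R) (p : A -> R) (s : seq Outcome) : nat :=
  if s is o :: s' then
    let p' := samba_next alpha p o in
    if (2^-1 : R) < p' astar then 1%N else (tau2_trunc astar alpha p' s').+1
  else 0%N.

Definition Etau2_trunc (r : A -> R) (astar : A) (alpha : R) (N : nat)
    (p : A -> R) : R :=
  \sum_(s : N.-tuple Outcome) path_prob r alpha p s * (tau2_trunc astar alpha p s)%:R.

(* E[ tau(2) | p(0) = p ] = sup_N E[min(tau(2),N)]  (monotone convergence),
   as an extended real (possibly +oo) *)
Definition Etau2 (r : A -> R) (astar : A) (alpha : R) (p : A -> R) : \bar R :=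
  ereal_sup [set (Etau2_trunc r astar alpha N p)%:E | N in [set: nat]].

Definition E2 (astar : A) (alpha : R) : set (A -> R) :=
  [set p | simplex p /\ (1 - alpha) / 2 <= p astar /\ p astar < 2^-1].

End Samba.

(* Main.v *)
Require Import Defs.
From HB Require Import structures.
From mathcomp Require Import all_boot all_order all_algebra.
From mathcomp Require Import all_classical all_reals ereal.
From mathcomp Require Import ring lra.
Import Order.TTheory GRing.Theory Num.Theory.
Local Open Scope ring_scope.
Local Open Scope classical_set_scope.
Set Implicit Arguments. Unset Strict Implicit. Unset Printing Implicit Defensive.

Section Real.
Variables (R : realType) (alpha : R).

Definition fM (M x : R) := - x^-1 + M * x.

Lemma NL_ineq (M rs rl rho D n q P : R) : 0 < alpha -> alpha < 1 ->
  0 < q -> q <= P -> 1 <= n * P -> 0 <= rl -> rl <= rho -> rho <= 1 ->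
  D <= rs - rl -> 0 <= M ->
  alpha * (rs / (1 + alpha) - rho - (alpha * n / (1 - alpha)) * q + M * D * q ^+ 2)
  <= q * rs * (fM M (q * (1 + alpha)) - fM M q)
     + P * rl * (fM M (q - alpha * q ^+ 2 / P) - fM M q).
Proof.
move=> ha0 ha1 q0 qP nP rl0 rlr r1 hD M0.
have P0 : 0 < P by lra.
have Paq : 0 < P - alpha * q by nra.
have h1 : q * rs * (fM M (q * (1 + alpha)) - fM M q)
          = alpha * rs / (1 + alpha) + M * alpha * q ^+ 2 * rs.
  rewrite /fM; field; apply/andP; split; apply/eqP; lra.
set u := (P - alpha * q)^-1.
have u0 : 0 < u by rewrite invr_gt0.
have Pu : P * u = 1 + alpha * q * u.
  by rewrite /u; field; apply/eqP; lra.
have h2 : P * rl * (fM M (q - alpha * q ^+ 2 / P) - fM M q)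
          = - alpha * rl * (P * u) - M * alpha * q ^+ 2 * rl.
  have -> : q - alpha * q ^+ 2 / P = q * (P - alpha * q) / P.
    by field; apply/eqP; lra.
  rewrite /fM /u; field; apply/and3P; split; apply/eqP; lra.
have n0 : 0 < n.
  by move: nP; rewrite -(ler_pdivrMr _ _ P0) => h; apply: lt_le_trans h; rewrite mul1r invr_gt0.
have e : (P - alpha * q) * u = 1 by rewrite /u mulfV // gt_eqF.
have hu : (1 - alpha) * u <= n.
  have h : 1 - alpha <= n * (P - alpha * q).
    have g1 : 0 <= n * P - 1 by lra.
    have g2 : 0 <= 1 - alpha by lra.
    have g3 : 0 <= P - q by lra.
    have := mulr_ge0 g1 g2.
    have := mulr_ge0 (mulr_ge0 (ltW ha0) (ltW n0)) g3.
    nra.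
  have := ler_wpM2r (ltW u0) h; rewrite -mulrA e mulr1 //.
have k1 : u <= n / (1 - alpha) by rewrite ler_pdivlMr ?subr_gt0 // mulrC.
have k2 : rl * (alpha * q * u) <= alpha * q * u.
  have : 0 <= alpha * q * u by apply: mulr_ge0; [apply: mulr_ge0|]; apply: ltW.
  nra.
have k3 : alpha * q * u <= alpha * q * (n / (1 - alpha)).
  by apply: ler_wpM2l => //; apply: mulr_ge0; apply: ltW.
have X0 : 0 <= rho + alpha * q * (n / (1 - alpha)) - rl * (1 + alpha * q * u) by lra.
have Y0 : 0 <= M * q ^+ 2 * (rs - rl) - M * D * q ^+ 2.
  have : M * q ^+ 2 * D <= M * q ^+ 2 * (rs - rl).
    by apply: ler_wpM2l => //; apply: mulr_ge0 => //; apply: sqr_ge0.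
  lra.
have := mulr_ge0 (ltW ha0) X0; have := mulr_ge0 (ltW ha0) Y0.
rewrite h1 h2 Pu.
lra.
Qed.

Lemma L_term (M n q x ra : R) : 0 < alpha -> alpha < 1 -> 0 < q ->
  0 <= x -> x <= q -> 1 <= n * q -> 0 <= ra -> ra <= 1 -> 0 <= M ->
  - alpha * x ^+ 2 * (n ^+ 2 / (1 - alpha) + M * ra)
  <= x * ra * (fM M (q - alpha * x) - fM M q).
Proof.
move=> ha0 ha1 q0 x0 xq nq ra0 ra1 M0.
have qa : 0 < q - alpha * x by nra.
set w := (q * (q - alpha * x))^-1.
have w0 : 0 < w by rewrite invr_gt0 mulr_gt0.
have e : fM M (q - alpha * x) - fM M q = - alpha * x * w - M * alpha * x.
  rewrite /fM /w; field; apply/andP; split; apply/eqP; lra.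
have n0 : 0 < n.
  by move: nq; rewrite -(ler_pdivrMr _ _ q0) => h; apply: lt_le_trans h; rewrite mul1r invr_gt0.
have hw : w <= n ^+ 2 / (1 - alpha).
  rewrite ler_pdivlMr ?subr_gt0 //.
  have h : 1 - alpha <= n ^+ 2 * (q * (q - alpha * x)).
    have g1 : 1 - alpha <= n * (q - alpha * x).
      have g : 0 <= alpha * n by apply: mulr_ge0; apply: ltW.
      have g2 : 0 <= q - x by lra.
      have g3 : 0 <= n * q - 1 by lra.
      have g4 : 0 <= 1 - alpha by lra.
      have := mulr_ge0 g g2; have := mulr_ge0 g3 g4.
      nra.
    have : 1 * (1 - alpha) <= (n * q) * (n * (q - alpha * x)).
      by apply: ler_pM => //; lra.
    rewrite mul1r => h; apply: le_trans h _; rewrite expr2; lra.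
  have wD : w * (q * (q - alpha * x)) = 1 by rewrite /w mulVf // gt_eqF // mulr_gt0.
  have := ler_wpM2l (ltW w0) h; rewrite mulrCA wD mulr1.
  by rewrite mulrC.
have k1 : ra * w <= n ^+ 2 / (1 - alpha) by nra.
rewrite e.
have g : 0 <= alpha * x ^+ 2 by apply: mulr_ge0; [apply: ltW | apply: sqr_ge0].
have g2 : 0 <= n ^+ 2 / (1 - alpha) - ra * w by lra.
have := mulr_ge0 g g2.
lra.
Qed.

Lemma astar_term (M q rs t : R) : 0 < q -> 0 <= t -> 0 <= rs -> 0 <= M ->
  M * rs * t <= q * rs * (fM M (q + t / q) - fM M q).
Proof.
move=> q0 t0 rs0 M0.
have tq : 0 <= t / q by apply: divr_ge0 => //; apply: ltW.
have qt : 0 < q + t / q by lra.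
have h : q^-1 - (q + t / q)^-1 >= 0.
  rewrite subr_ge0 lef_pV2 ?posrE //; rewrite lerDl divr_ge0 //; exact: ltW.
have e : fM M (q + t / q) - fM M q = (q^-1 - (q + t / q)^-1) + M * (t / q).
  by rewrite /fM; ring.
rewrite e mulrDr.
have -> : q * rs * (M * (t / q)) = M * rs * t by field; apply/eqP; lra.
have := mulr_ge0 (mulr_ge0 (ltW q0) rs0) h; lra.
Qed.

Lemma quad (d0 K MD q : R) : 0 < d0 -> K ^+ 2 / (2 * d0) <= MD ->
  d0 / 2 <= d0 - K * q + MD * q ^+ 2.
Proof.
move=> d00 hM.
have h1 : K ^+ 2 / (2 * d0) * q ^+ 2 <= MD * q ^+ 2 by apply: ler_wpM2r => //; apply: sqr_ge0.
have h2 : 0 <= (K * q - d0) ^+ 2 / (2 * d0) by apply: divr_ge0; [apply: sqr_ge0 | lra].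
have e : (K * q - d0) ^+ 2 / (2 * d0) = K ^+ 2 / (2 * d0) * q ^+ 2 - K * q + d0 / 2.
  by field; apply/eqP; lra.
lra.
Qed.
End Real.
Section Aux.
Variables (R : realType) (A : finType) (alpha : R).

Lemma sum_tuple_cons (T : finType) n (F : n.+1.-tuple T -> R) :
  \sum_(s : n.+1.-tuple T) F s = \sum_(o : T) \sum_(s : n.-tuple T) F [tuple of o :: s].
Proof.
rewrite pair_bigA /=.
rewrite (reindex (fun x : T * n.-tuple T => [tuple of x.1 :: x.2])) /=.
  by apply: eq_bigr => -[x s].
exists (fun s : n.+1.-tuple T => (thead s, [tuple of behead s])) => [[x s] _ /=|s _].
  by congr pair; apply/val_inj.
by apply/val_inj => /=; case: s => -[|x s] //=.
Qed.

Lemma in_argmax (p : A -> R) l : (l \in argmaxs p) = [forall c, p c <= p l].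
Proof. by rewrite /argmaxs inE. Qed.

Lemma argmax_le (p : A -> R) l c : l \in argmaxs p -> p c <= p l.
Proof. by rewrite in_argmax => /forallP. Qed.

Lemma argmax_ex (p : A -> R) (a0 : A) : exists l, l \in argmaxs p.
Proof.
case: (@arg_maxP _ _ _ a0 predT p) => // i _ H.
by exists i; rewrite in_argmax; apply/forallP => c; apply: H.
Qed.

Lemma sum_constA (x : R) : \sum_(c : A) x = #|A|%:R * x.
Proof. by rewrite sumr_const mulr_natl. Qed.

Lemma argmax_pos (p : A -> R) l : simplex p -> l \in argmaxs p -> 1 <= #|A|%:R * p l.
Proof.
move=> [p0 p1] hl; rewrite -sum_constA -p1.
by apply: ler_sum => c _; apply: argmax_le.
Qed.
Lemma sqdiv (x : R) : x ^+ 2 * (1 / x) = x.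
Proof. have [->|nz] := eqVneq x 0; first by rewrite expr0n mul0r. by field. Qed.

Lemma sum_but (p : A -> R) l : simplex p -> \sum_(c | c != l) p c = 1 - p l.
Proof. by move=> [_ p1]; rewrite -p1 [in RHS](bigD1 l) //= addrC addrK. Qed.

Lemma next_false (p : A -> R) l a c : simplex p -> samba_next alpha p (l, a, false) c = p c.
Proof.
move=> sp; rewrite /samba_next /samba_upd.
have E : forall c', p c' + alpha * p c' ^+ 2 *
   (((c' == a) && false)%:R / p c' - ((l == a) && false)%:R / p l) = p c'.
  by move=> c'; rewrite !andbF /= !mul0r subr0 mulr0 addr0.
case: eqP => [->|_]; last exact: E.
rewrite (eq_bigr _ (fun c' _ => E c')) sum_but //.
ring.
Qed.

Lemma next_other (p : A -> R) l a c : simplex p -> a != l ->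
  samba_next alpha p (l, a, true) c =
  if c == l then p l - alpha * p a else if c == a then p a * (1 + alpha) else p c.
Proof.
move=> sp al; rewrite /samba_next /samba_upd.
have E : forall c', p c' + alpha * p c' ^+ 2 *
   (((c' == a) && true)%:R / p c' - ((l == a) && true)%:R / p l)
   = p c' + (if c' == a then alpha * p a else 0).
  move=> c'; rewrite !andbT (eq_sym l) (negbTE al) /= mul0r subr0.
  case: eqP => [->|_] /=; last by rewrite mul0r mulr0 addr0.
  by rewrite -mulrA sqdiv.
have [_|cl] := eqVneq c l.
  rewrite (eq_bigr _ (fun c' _ => E c')) big_split /= sum_but //.
  rewrite (bigD1 a) //= eqxx big1 ?addr0; first by ring.
  by move=> i /andP[_ /negbTE ->].
by rewrite E; have [->|ca] := eqVneq c a; rewrite ?eqxx; ring.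
Qed.

Lemma next_lead (p : A -> R) l c : simplex p ->
  samba_next alpha p (l, l, true) c =
  if c == l then p l + alpha * (\sum_(c' | c' != l) p c' ^+ 2) / p l
  else p c - alpha * p c ^+ 2 / p l.
Proof.
move=> sp; rewrite /samba_next /samba_upd.
have E : forall c', c' != l -> p c' + alpha * p c' ^+ 2 *
   (((c' == l) && true)%:R / p c' - ((l == l) && true)%:R / p l)
   = p c' - alpha * p c' ^+ 2 / p l.
  by move=> c' /negbTE cl; rewrite cl eqxx /= mul0r; ring.
have [_|cl] := eqVneq c l; last by rewrite eqxx /= mul0r; ring.
rewrite (eq_bigr _ E) sumrB sum_but // -mulr_suml -mulr_sumr; ring.
Qed.

Lemma sp_decomp (r p : A -> R) (g : Outcome A -> R) :
  \sum_o step_prob r p o * g o =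
  \sum_(l in argmaxs p) #|argmaxs p|%:R^-1 *
     \sum_a p a * (r a * g (l, a, true) + (1 - r a) * g (l, a, false)).
Proof.
have -> : \sum_o step_prob r p o * g o =
   \sum_l \sum_a \sum_b step_prob r p (l, a, b) * g (l, a, b).
  by rewrite pair_bigA /= pair_bigA /=; apply: eq_bigr => -[[l a] b] _.
rewrite [RHS]big_mkcond /=; apply: eq_bigr => l _.
case: ifP => hl.
  rewrite mulr_sumr; apply: eq_bigr => a _.
  by rewrite big_bool /= /step_prob /=; ring.
by rewrite big1 // => a _; rewrite big1 // => b _; rewrite /step_prob /= !mul0r.
Qed.

Lemma sum_argmax_inv (p : A -> R) (a0 : A) :
  \sum_(l in argmaxs p) #|argmaxs p|%:R^-1 = 1 :> R.
Proof.
rewrite sumr_const -[LHS]mulr_natr mulVf //.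
have [l hl] := argmax_ex p a0.
by rewrite gt_eqF // ltr0n; apply/card_gt0P; exists l.
Qed.

Lemma sp_ge0 (r p : A -> R) o : simplex p -> (forall a, 0 <= r a <= 1) ->
  0 <= step_prob r p o.
Proof.
move=> [p0 _] hr; case: o => [[l a] b]; rewrite /step_prob.
have := hr a => /andP[h1 h2].
apply: mulr_ge0; first apply: mulr_ge0 => //.
  by case: ifP => _ //; rewrite invr_ge0.
by case: b => //; rewrite subr_ge0.
Qed.

Hypothesis (ha0 : 0 < alpha) (ha1 : alpha < 1).

Lemma shrink (x y : R) : 0 <= x -> x <= y -> 0 < y ->
  (1 - alpha) * x <= x - alpha * x ^+ 2 / y.
Proof.
move=> x0 xy y0.
suff : alpha * x ^+ 2 / y <= alpha * x by rewrite mulrBl mul1r; lra.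
rewrite -mulrA; apply: ler_wpM2l; first exact: ltW.
rewrite expr2 -mulrA; rewrite -[X in _ <= X]mulr1; apply: ler_wpM2l => //.
by rewrite ler_pdivrMr // mul1r.
Qed.

Lemma next_sum1 (p : A -> R) o : \sum_c samba_next alpha p o c = 1.
Proof.
case: o => [[l a] b]; rewrite (bigD1 l) //= eqxx.
rewrite [X in _ + X = _](eq_bigr (fun c => samba_upd alpha p (l, a, b) c)); first by rewrite subrK.
by move=> c /negbTE ->.
Qed.

Lemma next_lb (p : A -> R) l a b c : simplex p -> l \in argmaxs p -> 0 < p l ->
  (1 - alpha) * p c <= samba_next alpha p (l, a, b) c.
Proof.
move=> sp hl pl; have [p0 _] := sp; have := p0 c => pc.
case: b.
  have [->|al] := eqVneq a l.
    rewrite next_lead //; case: eqP => [->|_].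
      have : 0 <= alpha * (\sum_(c' | c' != l) p c' ^+ 2) / p l.
        apply: divr_ge0; last exact: ltW.
        by apply: mulr_ge0; [exact: ltW | apply: sumr_ge0 => i _; apply: sqr_ge0].
      set t := alpha * _ / p l => t0.
      have := mulr_ge0 (ltW ha0) (ltW pl); rewrite mulrBl mul1r; lra.
    by apply: shrink => //; apply: argmax_le.
  rewrite next_other //; case: eqP => [->|_].
    have : alpha * p a <= alpha * p l.
      by apply: ler_wpM2l; [exact: ltW | apply: argmax_le].
    rewrite mulrBl mul1r; lra.
  have := mulr_ge0 (ltW ha0) pc.
  case: eqP => [->|_]; rewrite mulrBl mul1r; [rewrite mulrDr mulr1|]; lra.
have := mulr_ge0 (ltW ha0) pc.
rewrite next_false // mulrBl mul1r; lra.
Qed.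

Lemma next_simplex (p : A -> R) l a b : simplex p -> l \in argmaxs p -> 0 < p l ->
  simplex (samba_next alpha p (l, a, b)).
Proof.
move=> sp hl pl; split; last exact: next_sum1.
move=> c; apply: le_trans (next_lb _ _ _ sp hl pl).
by apply: mulr_ge0; [rewrite subr_ge0; exact: ltW | case: sp].
Qed.
End Aux.

Section Drift.
Variables (R : realType) (A : finType) (alpha : R).

Lemma sumsq_lb (p : A -> R) astar : simplex p -> p astar <= 2^-1 ->
  (4 * #|A|%:R)^-1 <= \sum_(c | c != astar) p c ^+ 2.
Proof.
move=> sp hq.
set n : R := #|A|%:R.
have n0 : 0 < n by rewrite ltr0n; apply/card_gt0P; exists astar.
set t := (2 * n)^-1.
have h0 : 0 <= \sum_(c | c != astar) (p c - t) ^+ 2 by apply: sumr_ge0 => i _; apply: sqr_ge0.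
have e : \sum_(c | c != astar) (p c - t) ^+ 2 =
   \sum_(c | c != astar) p c ^+ 2 - 2 * t * \sum_(c | c != astar) p c
   + \sum_(c | c != astar) t ^+ 2.
  rewrite mulr_sumr -sumrB -big_split /=; apply: eq_bigr => i _; ring.
have h1 : \sum_(c | c != astar) t ^+ 2 <= n * t ^+ 2.
  rewrite /n -sum_constA [X in _ <= X](bigD1 astar) //= lerDr; exact: sqr_ge0.
rewrite sum_but // in e.
have t0 : 0 < t by rewrite invr_gt0; lra.
have ht : n * t ^+ 2 = t / 2 by rewrite /t; field; apply/eqP; lra.
have ht2 : (4 * n)^-1 = t / 2 by rewrite /t; field; apply/eqP; lra.
have ht3 : 2 * t * (1 - p astar) >= t by nra.
rewrite ht2; lra.
Qed.

Definition Fq (M : R) (p : A -> R) astar l a :=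
  fM M (samba_next alpha p (l, a, true) astar) - fM M (p astar).

Lemma drift_nonleader (r p : A -> R) astar l (M Delta rho d0 : R) :
  0 < alpha -> alpha < 1 -> simplex p -> 0 < p astar ->
  l \in argmaxs p -> l != astar ->
  (forall a, 0 <= r a <= 1) -> (forall a, a != astar -> r a <= rho) ->
  (forall a, a != astar -> Delta <= r astar - r a) -> rho <= 1 -> 0 <= M ->
  d0 = r astar / (1 + alpha) - rho -> 0 < d0 ->
  (alpha * #|A|%:R / (1 - alpha)) ^+ 2 / (2 * d0) <= M * Delta ->
  alpha * (d0 / 2) <= \sum_a p a * r a * Fq M p astar l a.
Proof.
move=> ha0 ha1 sp q0 hl las hr hrho hD r1 M0 ed0 d00 hM.
have pl : 0 < p l by have := argmax_le astar hl; lra.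
rewrite (bigD1 astar) //= (bigD1 l) //= big1 ?addr0; last first.
  move=> a /andP[aas al]; rewrite /Fq next_other // (eq_sym astar l) (negbTE las).
  rewrite (eq_sym astar a) (negbTE aas) subrr.
  by rewrite mulr0.
rewrite /Fq next_other //; last by rewrite eq_sym.
rewrite (eq_sym astar l) (negbTE las) eqxx next_lead // (eq_sym astar l) (negbTE las).
have := @NL_ineq R alpha M (r astar) (r l) rho Delta #|A|%:R (p astar) (p l) ha0 ha1 q0.
move/(_ (argmax_le _ hl) (argmax_pos sp hl)).
have /andP[rl0 _] := hr l.
move/(_ rl0 (hrho _ las) r1 (hD _ las) M0) => h.
apply: le_trans h; rewrite mulrC [X in _ <= X]mulrC; apply: ler_wpM2r; first exact: ltW.
move: (quad (p astar) d00 hM); rewrite ed0; lra.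
Qed.

Lemma drift_leader (r p : A -> R) astar (M Delta d0 n : R) : n = #|A|%:R ->
  0 < alpha -> alpha < 1 -> simplex p -> 0 < p astar -> p astar <= 2^-1 ->
  astar \in argmaxs p ->
  (forall a, 0 <= r a <= 1) ->
  (forall a, a != astar -> Delta <= r astar - r a) -> 0 <= M -> 0 < d0 ->
  n ^+ 2 / (1 - alpha) + 2 * n * d0 <= M * Delta ->
  alpha * (d0 / 2) <= \sum_a p a * r a * Fq M p astar astar a.
Proof.
move=> hn ha0 ha1 sp q0 qh hl hr hD M0 d00 hM.
have n0 : 0 < n by rewrite hn ltr0n; apply/card_gt0P; exists astar.
have nq := argmax_pos sp hl; rewrite -hn in nq.
have [p0 _] := sp.
have S0 := sumsq_lb sp qh; rewrite -hn in S0.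
set S := \sum_(c | c != astar) p c ^+ 2 in S0 *.
have aS : 0 <= alpha * S.
  by apply: mulr_ge0; [exact: ltW | apply: sumr_ge0 => i _; apply: sqr_ge0].
rewrite (bigD1 astar) //= {1}/Fq next_lead // eqxx.
have /andP[rs0 rs1] := hr astar.
have h1 := @astar_term R M (p astar) (r astar) (alpha * S) q0 aS rs0 M0.
have h2 : \sum_(a | a != astar) - alpha * p a ^+ 2 * (n ^+ 2 / (1 - alpha) + M * r a)
   <= \sum_(a | a != astar) p a * r a * Fq M p astar astar a.
  apply: ler_sum => a aas; rewrite /Fq next_other // eqxx.
  have /andP[ra0 ra1] := hr a.
  exact: (@L_term R alpha M n (p astar) (p a) (r a) ha0 ha1 q0 (p0 a) (argmax_le _ hl) nq ra0 ra1 M0).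
have e1 : M * r astar * (alpha * S) +
    \sum_(a | a != astar) - alpha * p a ^+ 2 * (n ^+ 2 / (1 - alpha) + M * r a)
    = \sum_(a | a != astar) alpha * p a ^+ 2 * (M * (r astar - r a) - n ^+ 2 / (1 - alpha)).
  rewrite /S !mulr_sumr -big_split /=; apply: eq_bigr => i _; ring.
set C := M * Delta - n ^+ 2 / (1 - alpha).
have e2 : \sum_(a | a != astar) alpha * p a ^+ 2 * C
   <= \sum_(a | a != astar) alpha * p a ^+ 2 * (M * (r astar - r a) - n ^+ 2 / (1 - alpha)).
  apply: ler_sum => a aas; apply: ler_wpM2l.
    by apply: mulr_ge0; [apply: ltW | apply: sqr_ge0].
  by rewrite /C lerD2r; apply: ler_wpM2l => //; apply: hD.
have e3 : \sum_(a | a != astar) alpha * p a ^+ 2 * C = alpha * C * S.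
  by rewrite /S mulr_sumr; apply: eq_bigr => i _; ring.
have C0 : 2 * n * d0 <= C by rewrite /C; lra.
have e4 : alpha * (d0 / 2) <= alpha * C * S.
  rewrite -mulrA; apply: ler_wpM2l; first exact: ltW.
  have : 2 * n * d0 * (4 * n)^-1 <= C * S.
    apply: ler_pM => //; last by rewrite invr_ge0; lra.
    by apply: mulr_ge0; [apply: mulr_ge0|]; apply: ltW => //; lra.
  have -> : 2 * n * d0 * (4 * n)^-1 = d0 / 2 by field; apply/eqP; lra.
  done.
lra.
Qed.
End Drift.

Section Gen.
Variables (R : realType) (A : finType) (alpha : R) (r : A -> R).
Hypothesis hr : forall a, 0 <= r a <= 1.

Lemma sp_le (p : A -> R) (X Y : Outcome A -> R) : simplex p ->
  (forall l a b, l \in argmaxs p -> X (l, a, b) <= Y (l, a, b)) ->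
  \sum_o step_prob r p o * X o <= \sum_o step_prob r p o * Y o.
Proof.
move=> sp h; apply: ler_sum => -[[l a] b] _.
case hl : (l \in argmaxs p).
  by apply: ler_wpM2l; [exact: sp_ge0 | exact: h].
by rewrite /step_prob /= hl !mul0r.
Qed.

Lemma sp_eq (p : A -> R) (X Y : Outcome A -> R) : simplex p ->
  (forall l a b, l \in argmaxs p -> X (l, a, b) = Y (l, a, b)) ->
  \sum_o step_prob r p o * X o = \sum_o step_prob r p o * Y o.
Proof.
move=> sp h; apply/eqP; rewrite eq_le; apply/andP; split; apply: sp_le => // l a b hl;
  by rewrite h.
Qed.

Lemma sp_sum1 (p : A -> R) (a0 : A) : simplex p -> \sum_o step_prob r p o = 1.
Proof.
move=> sp.
have e : \sum_o step_prob r p o = \sum_o step_prob r p o * 1.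
  by apply: eq_bigr => o _; rewrite mulr1.
rewrite e (sp_decomp r p (fun _ => 1)) -[RHS](sum_argmax_inv p a0); apply: eq_bigr => l _.
rewrite -[RHS]mulr1; congr (_ * _); rewrite (eq_bigr p); [by case: sp | move=> a _; ring].
Qed.

Lemma Tsum (a0 : A) N (p : A -> R) : simplex p ->
  \sum_(s : N.-tuple (Outcome A)) path_prob r alpha p s = 1.
Abort.
Hypothesis (ha0 : 0 < alpha) (ha1 : alpha < 1).

Lemma argmax_lpos (p : A -> R) l : simplex p -> l \in argmaxs p -> 0 < p l.
Proof.
move=> sp hl; have := argmax_pos sp hl.
have [p0 _] := sp; have := p0 l; rewrite le_eqVlt => /orP[/eqP <-|//].
by rewrite mulr0 ler10.
Qed.

Lemma Tsum (a0 : A) N (p : A -> R) : simplex p ->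
  \sum_(s : N.-tuple (Outcome A)) path_prob r alpha p s = 1.
Proof.
elim: N p => [|N IH] p sp.
  rewrite (eq_bigr (fun _ => 1)); last by move=> s _; rewrite tuple0.
  by rewrite sumr_const card_tuple expn0.
rewrite sum_tuple_cons -(sp_sum1 a0 sp).
have -> : \sum_o step_prob r p o = \sum_o step_prob r p o * 1.
  by apply: eq_bigr => o _; rewrite mulr1.
rewrite (eq_bigr (fun o => step_prob r p o *
    \sum_(s : N.-tuple (Outcome A)) path_prob r alpha (samba_next alpha p o) s)).
  apply: sp_eq => // l a b hl; apply: IH; apply: next_simplex => //.
  exact: argmax_lpos.
by move=> o _ /=; rewrite mulr_sumr.
Qed.

Lemma Erec (astar : A) N (p : A -> R) :
  Etau2_trunc r astar alpha N.+1 p =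
  \sum_o step_prob r p o *
    (\sum_(s : N.-tuple (Outcome A)) path_prob r alpha (samba_next alpha p o) s
     + (if 2^-1 < samba_next alpha p o astar then 0
        else Etau2_trunc r astar alpha N (samba_next alpha p o))).
Proof.
rewrite /Etau2_trunc sum_tuple_cons; apply: eq_bigr => o _ /=.
case: ifP => _.
  by rewrite addr0 mulr_sumr; apply: eq_bigr => s _; rewrite mulr1.
rewrite -big_split /= mulr_sumr; apply: eq_bigr => s _.
by rewrite -addn1 natrD; ring.
Qed.
End Gen.

Section Main.
Variables (R : realType) (A : finType) (alpha : R) (r : A -> R) (astar : A)
  (M Delta rho d0 n : R).
Hypotheses (hr : forall a, 0 <= r a <= 1) (ha0 : 0 < alpha) (ha1 : alpha < 1)
  (hrho : forall a, a != astar -> r a <= rho)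
  (hD : forall a, a != astar -> Delta <= r astar - r a) (r1 : rho <= 1) (M0 : 0 <= M)
  (ed0 : d0 = r astar / (1 + alpha) - rho) (d00 : 0 < d0) (hn : n = #|A|%:R)
  (hM1 : (alpha * #|A|%:R / (1 - alpha)) ^+ 2 / (2 * d0) <= M * Delta)
  (hM2 : n ^+ 2 / (1 - alpha) + 2 * n * d0 <= M * Delta).

Lemma drift_all (p : A -> R) : simplex p -> 0 < p astar -> p astar <= 2^-1 ->
  fM M (p astar) + alpha * (d0 / 2) <=
  \sum_o step_prob r p o * fM M (samba_next alpha p o astar).
Proof.
move=> sp q0 qh.
rewrite sp_decomp.
set c := fM M (p astar) + alpha * (d0 / 2).
have key : forall l, l \in argmaxs p -> c <=
    \sum_a p a * (r a * fM M (samba_next alpha p (l, a, true) astar)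
                  + (1 - r a) * fM M (samba_next alpha p (l, a, false) astar)).
  move=> l hl.
  have e : \sum_a p a * (r a * fM M (samba_next alpha p (l, a, true) astar)
                  + (1 - r a) * fM M (samba_next alpha p (l, a, false) astar))
     = fM M (p astar) + \sum_a p a * r a * Fq alpha M p astar l a.
    have -> : fM M (p astar) = \sum_a p a * fM M (p astar).
      by rewrite -mulr_suml; case: sp => _ ->; rewrite mul1r.
    rewrite -big_split; apply: eq_bigr => a _.
    rewrite next_false // /Fq /=; ring.
  rewrite e /c lerD2l.
  have [las|las] := eqVneq l astar.
    subst l; exact: (drift_leader hn ha0 ha1 sp q0 qh hl hr hD M0 d00 hM2).
  exact: (drift_nonleader ha0 ha1 sp q0 hl las hr hrho hD r1 M0 ed0 d00 hM1).
have c1 : c = \sum_(l in argmaxs p) #|argmaxs p|%:R^-1 * c.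
  by rewrite -mulr_suml (sum_argmax_inv p astar) mul1r.
rewrite {1}c1; apply: ler_sum => l hl; apply: ler_wpM2l; last exact: key.
by rewrite invr_ge0.
Qed.

Lemma simplex_le1 (p : A -> R) c : simplex p -> p c <= 1.
Proof.
move=> [p0 <-]; rewrite (bigD1 c) //= lerDl; apply: sumr_ge0 => i _; exact: p0.
Qed.

Lemma fM_leM (q : R) : 0 < q -> q <= 1 -> fM M q <= M.
Proof.
move=> q0 q1; rewrite /fM.
have : 0 < q^-1 by rewrite invr_gt0.
have : M * q <= M * 1 by apply: ler_wpM2l.
lra.
Qed.

Lemma Ebound N (p : A -> R) : simplex p -> 0 < p astar -> p astar <= 2^-1 ->
  Etau2_trunc r astar alpha N p <= (M - fM M (p astar)) / (alpha * (d0 / 2)).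
Proof.
have eps0 : 0 < alpha * (d0 / 2) by apply: mulr_gt0 => //; apply: divr_gt0.
elim: N p => [|N IH] p sp q0 qh.
  rewrite /Etau2_trunc big1; last by move=> s _; rewrite tuple0 /= mulr0.
  apply: divr_ge0; last exact: ltW.
  by rewrite subr_ge0; apply: fM_leM => //; apply: simplex_le1.
rewrite Erec.
set eps := alpha * (d0 / 2).
set X := fun o => fM M (samba_next alpha p o astar).
have h1 : \sum_o step_prob r p o *
    (\sum_(s : N.-tuple (Outcome A)) path_prob r alpha (samba_next alpha p o) s
     + (if 2^-1 < samba_next alpha p o astar then 0
        else Etau2_trunc r astar alpha N (samba_next alpha p o)))
   <= \sum_o step_prob r p o * (1 + (M - X o) / eps).
  apply: sp_le => // l a b hl.
  have pl := argmax_lpos sp hl.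
  have sp' := next_simplex ha0 ha1 a b sp hl pl.
  rewrite (Tsum hr ha0 ha1 astar) // lerD2l /X.
  have q0' : 0 < samba_next alpha p (l, a, b) astar.
    apply: lt_le_trans (next_lb ha0 a b astar sp hl pl).
    by apply: mulr_gt0 => //; rewrite subr_gt0.
  case: ifP => hq.
    apply: divr_ge0; last exact: ltW.
    by rewrite subr_ge0; apply: fM_leM => //; apply: simplex_le1.
  by apply: IH => //; rewrite leNgt hq.
apply: le_trans h1 _.
have e : \sum_o step_prob r p o * (1 + (M - X o) / eps)
   = \sum_o step_prob r p o * (1 + M / eps) - (\sum_o step_prob r p o * X o) / eps.
  rewrite mulr_suml -sumrB; apply: eq_bigr => o _; field; rewrite gt_eqF //.
rewrite e -mulr_suml (sp_sum1 _ astar sp) mul1r.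
have hd := drift_all sp q0 qh.
have : (fM M (p astar) + eps) / eps <= (\sum_o step_prob r p o * X o) / eps.
  by rewrite ler_pM2r // invr_gt0.
have -> : (fM M (p astar) + eps) / eps = fM M (p astar) / eps + 1.
  by field; rewrite gt_eqF //.
rewrite mulrBl mulrDl.
lra.
Qed.
End Main.
Unset Implicit Arguments.

Theorem corollary7 (R : realType) (A : finType) (r : A -> R) (astar : A)
    (Delta alpha : R) :
  (forall a, 0 <= r a <= 1) ->
  (forall a, a != astar -> r a < r astar) ->
  (forall a, a != astar -> r a <= r astar - Delta) ->
  (exists2 a, a != astar & r a = r astar - Delta) ->
  0 < alpha < 1 ->
  alpha * (r astar - Delta) < Delta ->
  (ereal_sup [set Etau2 r astar alpha p | p in E2 astar alpha] < +oo)%E.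
Proof.
move=> hr hlt hle [a0 a0s ea0] /andP[ha0 ha1] hcond.
pose n : R := #|A|%:R.
have hn : n = #|A|%:R by [].
have n0 : 0 < n by rewrite hn ltr0n; apply/card_gt0P; exists astar.
pose rho := r astar - Delta.
have D0 : 0 < Delta by have := hlt a0 a0s; lra.
have /andP[ra00 ra01] := hr a0.
have /andP[rs0 rs1] := hr astar.
have r1 : rho <= 1 by rewrite /rho -ea0.
have rho0 : 0 <= rho by rewrite /rho -ea0.
pose d0 := r astar / (1 + alpha) - rho.
have ed0 : d0 = r astar / (1 + alpha) - rho by [].
have d00 : 0 < d0.
  have -> : d0 = (Delta - alpha * rho) / (1 + alpha).
    by rewrite /d0 /rho; field; apply/eqP; lra.
  by apply: divr_gt0; rewrite /rho; lra.
pose K := alpha * #|A|%:R / (1 - alpha).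
pose MD := K ^+ 2 / (2 * d0) + n ^+ 2 / (1 - alpha) + 2 * n * d0.
pose M := MD / Delta.
have eMD : M * Delta = MD by rewrite /M divfK // gt_eqF.
have t1 : 0 <= K ^+ 2 / (2 * d0) by apply: divr_ge0; [apply: sqr_ge0 | lra].
have t2 : 0 <= n ^+ 2 / (1 - alpha) by apply: divr_ge0; [apply: sqr_ge0 | lra].
have t3 : 0 <= 2 * n * d0 by apply: mulr_ge0; [apply: mulr_ge0|]; lra.
have hM1 : K ^+ 2 / (2 * d0) <= M * Delta by rewrite eMD /MD; lra.
have hM2 : n ^+ 2 / (1 - alpha) + 2 * n * d0 <= M * Delta by rewrite eMD /MD; lra.
have M0 : 0 <= M by apply: divr_ge0; [rewrite /MD; lra | lra].
have hrho : forall a, a != astar -> r a <= rho by move=> a /hle.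
have hD : forall a, a != astar -> Delta <= r astar - r a.
  by move=> a /hle; lra.
pose eps := alpha * (d0 / 2).
have eps0 : 0 < eps by apply: mulr_gt0 => //; apply: divr_gt0.
pose B := (M + 2 / (1 - alpha)) / eps.
apply: (@le_lt_trans _ _ B%:E); last exact: ltry.
apply: ge_ereal_sup => _ [p [sp [ql qh]] <-].
apply: ge_ereal_sup => _ [N _ <-]; rewrite lee_fin.
have q0 : 0 < p astar by apply: lt_le_trans ql; apply: divr_gt0; lra.
apply: le_trans (Ebound hr ha0 ha1 hrho hD r1 M0 ed0 d00 hn hM1 hM2 N sp q0 (ltW qh)) _.
rewrite /B ler_pM2r ?invr_gt0 // /fM.
have : (p astar)^-1 <= 2 / (1 - alpha).
  rewrite -[2 / _]invf_div lef_pV2 ?posrE //; last by apply: divr_gt0; lra.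
have : 0 <= M * p astar by apply: mulr_ge0 => //; apply: ltW.
lra.
Qed.
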